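(* Let $(M,d)$ be a complete pointed metric space and let $\nu$ be a positive Radon measure on $\beta\widetilde{M}$. Then there exists a $\preccurlyeq$-minimal positive Radon measure $\mu$ on $\beta\widetilde{M}$ with $\mu\preccurlyeq\nu$.
   Context: $\widetilde{M}=\{(x,y)\in M\times M:x\ne y\}$, $\beta\widetilde{M}$ its Stone–Čech compactification; Radon measures identified with $C(\beta\widetilde{M})^*$. $G$ is the set of $g\in C(\beta\widetilde{M})$ with $d(x,y)g(x,y)\le d(x,u)g(x,u)+d(u,y)g(u,y)$ for all distinct $x,u,y\in M$. For positive Radon measures, $\mu\preccurlyeq\nu$ iff $\int g\,d\mu\le\int g\,d\nu$ for all $g\in G$; $\mu$ is $\preccurlyeq$-minimal if every positive $\lambda$ with $\lambda\preccurlyeq\mu$ satisfies $\mu\preccurlyeq\lambda$. Throughout, $M$ has at least three distinct points. *)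

(* Defs.v *)
From Stdlib Require Import Reals.
Open Scope R_scope.

Definition is_metric {T : Type} (d : T -> T -> R) : Prop :=
  (forall x y, 0 <= d x y) /\
  (forall x y, d x y = 0 <-> x = y) /\
  (forall x y, d x y = d y x) /\
  (forall x y z, d x z <= d x y + d y z).

Definition complete_metric {T : Type} (d : T -> T -> R) : Prop :=
  forall u : nat -> T,
    (forall eps, 0 < eps -> exists N, forall m n, (N <= m)%nat -> (N <= n)%nat ->
        d (u m) (u n) < eps) ->
    exists l, forall eps, 0 < eps -> exists N, forall n, (N <= n)%nat -> d (u n) l < eps.

Definition Mt (T : Type) := {p : T * T | fst p <> snd p}.

Definition mt_x {T} (p : Mt T) : T := fst (proj1_sig p).
Definition mt_y {T} (p : Mt T) : T := snd (proj1_sig p).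

(** A metric on Mtilde inducing the (subspace of the) product topology. *)
Definition dt {T} (d : T -> T -> R) (p q : Mt T) : R :=
  d (mt_x p) (mt_x q) + d (mt_y p) (mt_y q).

(** C(beta Mtilde) identified (by restriction) with the bounded continuous
    real functions on Mtilde. *)
Definition Cb {T} (d : T -> T -> R) (g : Mt T -> R) : Prop :=
  (exists C, forall p, Rabs (g p) <= C) /\
  (forall p eps, 0 < eps -> exists delta, 0 < delta /\
      forall q, dt d p q < delta -> Rabs (g q - g p) < eps).

(** Positive Radon measures on beta Mtilde = positive linear functionals on
    C(beta Mtilde) = C_b(Mtilde) (Riesz); only their values on C_b matter. *)
Definition positive_radon {T} (d : T -> T -> R) (mu : (Mt T -> R) -> R) : Prop :=
  (forall f g a b, Cb d f -> Cb d g ->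
     mu (fun p => a * f p + b * g p) = a * mu f + b * mu g) /\
  (forall f, Cb d f -> (forall p, 0 <= f p) -> 0 <= mu f).

Definition in_G {T} (d : T -> T -> R) (g : Mt T -> R) : Prop :=
  Cb d g /\
  forall (x u y : T) (hxu : x <> u) (huy : u <> y) (hxy : x <> y),
    d x y * g (exist _ (x, y) hxy) <=
      d x u * g (exist _ (x, u) hxu) + d u y * g (exist _ (u, y) huy).

Definition preceq {T} (d : T -> T -> R) (mu nu : (Mt T -> R) -> R) : Prop :=
  forall g, in_G d g -> mu g <= nu g.

Definition preceq_minimal {T} (d : T -> T -> R) (mu : (Mt T -> R) -> R) : Prop :=
  forall lam, positive_radon d lam -> preceq d lam mu -> preceq d mu lam.

(* Main.v *)
Require Import Defs.
From mathcomp Require Import all_boot boolp classical_sets filter.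
From Stdlib Require Import Reals Lra ClassicalEpsilon Classical.
Open Scope R_scope.

Lemma U_ex {I : Type} (U : set_system I) (HU : ProperFilter U) (B : set I) :
  U B -> exists i, B i.
Proof.
intros HB. apply NNPP; intro Hn. apply (filter_not_empty U).
apply (filterS (F:=U) (P:=B)); [|exact HB]. intros i Bi. apply Hn. exists i. exact Bi.
Qed.

Definition conv {I : Type} (U : set_system I) (x : I -> R) (l : R) :=
  forall eps, 0 < eps -> U (fun i => Rabs (x i - l) < eps).

Lemma conv_uniq (I : Type) (U : set_system I) (HU : ProperFilter U) x l1 l2 :
  conv U x l1 -> conv U x l2 -> l1 = l2.
Proof.
intros H1 H2. apply NNPP; intro Hn.
assert (He : 0 < Rabs (l1 - l2) / 2).
{ assert (0 < Rabs (l1 - l2)) by (apply Rabs_pos_lt; lra). lra. }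
destruct (U_ex _ HU _ (filterI (F:=U) (H1 _ He) (H2 _ He))) as [i [Hi1 Hi2]].
pose proof (Rabs_triang (l1 - x i) (x i - l2)).
replace (l1 - x i + (x i - l2)) with (l1 - l2) in H by ring.
rewrite (Rabs_minus_sym l1 (x i)) in H. lra.
Qed.

Lemma ultralim (I : Type) (U : set_system I) (HU : UltraFilter U) (x : I -> R) (B : R) :
  (forall i, Rabs (x i) <= B) -> exists l, conv U x l.
Proof.
intros HB.
set S := fun a => U (fun i => a <= x i).
assert (Sb : bound S).
{ exists B. intros a Sa. destruct (Rle_or_lt a B) as [h|h]; [exact h|].
  exfalso. apply (filter_not_empty U). apply (filterS (F:=U) (P:=fun i => a <= x i)); [|exact Sa].
  intros i Hi. specialize (HB i). pose proof (Rle_abs (x i)). simpl. lra. }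
assert (Sne : exists a, S a).
{ exists (-B). unfold S. apply (filterS (F:=U) (P:=setT)); [|apply (filterT (F:=U))].
  intros i _. specialize (HB i). pose proof (Rle_abs (- x i)). rewrite Rabs_Ropp in H. lra. }
destruct (completeness S Sb Sne) as [l [Hub Hlub]].
exists l. intros eps Heps.
assert (Ha : exists a, S a /\ l - eps < a).
{ apply NNPP; intro Hn. assert (l <= l - eps); [|lra].
  apply Hlub. intros a Sa. destruct (Rle_or_lt a (l - eps)) as [h|h]; [exact h|].
  exfalso. apply Hn. exists a. split; assumption. }
destruct Ha as [a [Sa Hal]].
assert (Hn : ~ S (l + eps / 2)).
{ intro Hs. pose proof (Hub _ Hs). lra. }
destruct (in_ultra_setVsetC (fun i => l + eps / 2 <= x i) HU) as [h|h]; [contradiction|].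
apply (filterS (F:=U) (P := ((fun i => a <= x i) `&` (~` (fun i => l + eps / 2 <= x i)))%classic)).
2: apply (filterI (F:=U)); assumption.
intros i [h1 h2]. simpl in h2. apply Rabs_def1; lra.
Qed.

Lemma Cb_const {T} (d : T -> T -> R) c : Cb d (fun _ => c).
Proof.
split.
- exists (Rabs c). intros; lra.
- intros p eps Heps. exists 1. split; [lra|]. intros q _.
  replace (c - c) with 0 by ring. rewrite Rabs_R0. exact Heps.
Qed.

Lemma Cb_aff {T} (d : T -> T -> R) f a b :
  Cb d f -> Cb d (fun p => a * 1 + b * f p).
Proof.
intros [[C HC] Hc]. split.
- exists (Rabs a + Rabs b * C). intros p.
  eapply Rle_trans; [apply Rabs_triang|]. rewrite !Rabs_mult Rabs_R1.
  pose proof (HC p). pose proof (Rabs_pos b).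
  assert (Rabs b * Rabs (f p) <= Rabs b * C) by (apply Rmult_le_compat_l; lra). lra.
- intros p eps Heps.
  assert (Hb : 0 < Rabs b + 1) by (pose proof (Rabs_pos b); lra).
  destruct (Hc p (eps / (Rabs b + 1))) as [del [Hdel Hq]].
  { apply Rdiv_lt_0_compat; lra. }
  exists del. split; [exact Hdel|]. intros q Hdq.
  replace (a * 1 + b * f q - (a * 1 + b * f p)) with (b * (f q - f p)) by ring.
  rewrite Rabs_mult. specialize (Hq q Hdq).
  assert (Rabs b * Rabs (f q - f p) <= Rabs b * (eps / (Rabs b + 1))).
  { apply Rmult_le_compat_l; [apply Rabs_pos|lra]. }
  assert (Rabs b * (eps / (Rabs b + 1)) < eps); [|lra].
  assert (eps = (Rabs b + 1) * (eps / (Rabs b + 1))) by (field; lra).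
  assert (0 < eps / (Rabs b + 1)) by (apply Rdiv_lt_0_compat; lra).
  lra.
Qed.

Lemma one_in_G {T} (d : T -> T -> R) : is_metric d -> in_G d (fun _ => 1).
Proof.
intros [_ [_ [_ Htri]]]. split; [apply Cb_const|].
intros x u y _ _ _. rewrite !Rmult_1_r. apply Htri.
Qed.

Lemma preceq_trans {T} {d : T -> T -> R} {a b c} :
  preceq d a b -> preceq d b c -> preceq d a c.
Proof. intros H1 H2 g Hg. eapply Rle_trans; [apply H1|apply H2]; exact Hg. Qed.

Lemma bound_lam {T} (d : T -> T -> R) (nu lam : (Mt T -> R) -> R) :
  is_metric d -> positive_radon d lam -> preceq d lam nu ->
  forall f C, Cb d f -> (forall p, Rabs (f p) <= C) ->
  Rabs (lam f) <= Rabs C * nu (fun _ => 1).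
Proof.
intros Hm [Hlin Hpos] Hpr f C Hf HC.
pose proof (Hpr _ (one_in_G d Hm)) as H1.
pose proof (Hlin (fun _ => 1) f (Rabs C) 1 (Cb_const d 1) Hf) as E1.
pose proof (Hlin (fun _ => 1) f (Rabs C) (-1) (Cb_const d 1) Hf) as E2.
cbv beta in E1, E2.
pose proof (Hpos _ (Cb_aff d f (Rabs C) 1 Hf)) as P1.
pose proof (Hpos _ (Cb_aff d f (Rabs C) (-1) Hf)) as P2.
rewrite E1 in P1. rewrite E2 in P2.
assert (Q1 : 0 <= Rabs C * lam (fun _ => 1) + 1 * lam f).
{ apply P1. intros p. specialize (HC p). pose proof (Rle_abs (- f p)).
  rewrite Rabs_Ropp in H. pose proof (Rle_abs C). lra. }
assert (Q2 : 0 <= Rabs C * lam (fun _ => 1) + -1 * lam f).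
{ apply P2. intros p. specialize (HC p). pose proof (Rle_abs (f p)).
  pose proof (Rle_abs C). lra. }
assert (Rabs C * lam (fun _ => 1) <= Rabs C * nu (fun _ => 1)).
{ apply Rmult_le_compat_l; [apply Rabs_pos|exact H1]. }
apply Rabs_le. lra.
Qed.

Definition PP {T} (d : T -> T -> R) (nu : (Mt T -> R) -> R) :=
  {mu : (Mt T -> R) -> R | positive_radon d mu /\ preceq d mu nu}.

Definition Rel {T} (d : T -> T -> R) nu : rel (PP d nu) :=
  fun a b => `[< preceq d (proj1_sig b) (proj1_sig a) >].

Lemma conv_lin {I : Type} (U : set_system I) (HU : Filter U) (x y : I -> R) l m a b :
  conv U x l -> conv U y m -> conv U (fun i => a * x i + b * y i) (a * l + b * m).
Proof.
intros Hx Hy eps Heps.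
assert (Hk : 0 < Rabs a + Rabs b + 1) by (pose proof (Rabs_pos a); pose proof (Rabs_pos b); lra).
pose (e := eps / (Rabs a + Rabs b + 1)).
assert (He : 0 < e) by (apply Rdiv_lt_0_compat; lra).
apply (filterS (F:=U) (P := ((fun i => Rabs (x i - l) < e)
   `&` (fun i => Rabs (y i - m) < e))%classic)).
2: apply (filterI (F:=U)); [apply Hx|apply Hy]; exact He.
intros i [h1 h2].
replace (a * x i + b * y i - (a * l + b * m)) with (a * (x i - l) + b * (y i - m)) by ring.
eapply Rle_lt_trans; [apply Rabs_triang|]. rewrite !Rabs_mult.
assert (Rabs a * Rabs (x i - l) <= Rabs a * e) by (apply Rmult_le_compat_l; [apply Rabs_pos|lra]).
assert (Rabs b * Rabs (y i - m) <= Rabs b * e) by (apply Rmult_le_compat_l; [apply Rabs_pos|lra]).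
assert (eps = (Rabs a + Rabs b + 1) * e) by (unfold e; field; lra).
assert ((Rabs a + Rabs b) * e < eps); [|lra].
lra.
Qed.

Lemma chain_lb {T} (d : T -> T -> R) nu (Hm : is_metric d) (Hnu : positive_radon d nu)
  (A : set (PP d nu)) :
  total_on A (fun a b => Rel d nu a b) -> exists t, forall s, A s -> Rel d nu s t.
Proof.
intro Htot.
destruct (classic (exists c, A c)) as [[c0 Ac0]|Hne].
2: { exists (exist _ nu (conj Hnu (fun g _ => Rle_refl _))). intros s As.
     exfalso; apply Hne; exists s; exact As. }
set F := fun B : set (PP d nu) => exists c, A c /\
   forall s, A s -> preceq d (proj1_sig s) (proj1_sig c) -> B s.
assert (HF : ProperFilter F).
{ apply Build_ProperFilter.
  - intros [c [Ac Hc]]. exact (Hc c Ac (fun g _ => Rle_refl _)).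
  - apply Build_Filter.
    + exists c0. split; [exact Ac0|]. intros; done.
    + intros B1 B2 [c1 [Ac1 H1]] [c2 [Ac2 H2]].
      destruct (Htot c1 c2 Ac1 Ac2) as [h|h]; move/asboolP: h => h.
      * exists c2. split; [exact Ac2|]. intros s As Hs. split.
        -- apply H1; [exact As|]. exact (preceq_trans Hs h).
        -- apply H2; assumption.
      * exists c1. split; [exact Ac1|]. intros s As Hs. split.
        -- apply H1; assumption.
        -- apply H2; [exact As|]. exact (preceq_trans Hs h).
    + intros P Q PQ [c [Ac Hc]]. exists c. split; [exact Ac|].
      intros s As Hs. apply PQ. exact (Hc s As Hs). }
destruct (ultraFilterLemma HF) as [U [HU FU]].
pose proof (@ultra_proper _ _ HU) as HPU.
set mu := fun f => epsilon (inhabits 0) (fun l => conv U (fun i : PP d nu => proj1_sig i f) l).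
assert (Hconv : forall f, Cb d f -> conv U (fun i : PP d nu => proj1_sig i f) (mu f)).
{ intros f Hf. apply epsilon_spec. destruct (proj1 Hf) as [C HC].
  apply (ultralim _ U HU _ (Rabs C * nu (fun _ => 1))).
  intros i. destruct (proj2_sig i) as [Hi Hpi]. exact (bound_lam _ _ _ Hm Hi Hpi f C Hf HC). }
assert (Hmu : positive_radon d mu).
{ split.
  - intros f g a b Hf Hg.
    assert (Hc : conv U (fun i : PP d nu => proj1_sig i (fun p => a * f p + b * g p))
                   (a * mu f + b * mu g)).
    { intros eps Heps.
      apply (filterS (F:=U) (P := fun i : PP d nu => Rabs ((a * proj1_sig i f + b * proj1_sig i g)
               - (a * mu f + b * mu g)) < eps)).
      2: exact (conv_lin _ _ _ _ _ _ _ _ (Hconv f Hf) (Hconv g Hg) eps Heps).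
      intros i Hi. simpl. rewrite (proj1 (proj1 (proj2_sig i)) f g a b Hf Hg). exact Hi. }
    apply (conv_uniq _ U HPU (fun i : PP d nu => proj1_sig i (fun p => a * f p + b * g p))).
    + apply epsilon_spec. exists (a * mu f + b * mu g). exact Hc.
    + exact Hc.
  - intros f Hf Hp. apply Rnot_lt_le. intro Hlt.
    assert (He : 0 < - mu f) by lra.
    destruct (U_ex _ HPU _ (Hconv f Hf _ He)) as [i Hi].
    pose proof (proj2 (proj1 (proj2_sig i)) f Hf Hp).
    pose proof (Rle_abs (proj1_sig i f - mu f)). lra. }
assert (Hlow : forall c, A c -> preceq d mu (proj1_sig c)).
{ intros c Ac g Hg. apply Rnot_lt_le. intro Hlt.
  assert (He : 0 < mu g - proj1_sig c g) by lra.
  assert (Hc : U (fun s : PP d nu => preceq d (proj1_sig s) (proj1_sig c))).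
  { apply FU. exists c. split; [exact Ac|]. intros s _ Hs; exact Hs. }
  destruct (U_ex _ HPU _ (filterI (F:=U) Hc (Hconv g (proj1 Hg) _ He))) as [i [Hi1 Hi2]].
  pose proof (Hi1 g Hg). pose proof (Rle_abs (- (proj1_sig i g - mu g))).
  rewrite Rabs_Ropp in H0. lra. }
exists (exist _ mu (conj Hmu (preceq_trans (Hlow c0 Ac0) (proj2 (proj2_sig c0))))).
intros s As. apply/asboolP. exact (Hlow s As).
Qed.

Theorem proposition3p10 (T : Type) (d : T -> T -> R) (base : T)
  (Hmet : is_metric d) (Hcomplete : complete_metric d)
  (H3 : exists x y z : T, x <> y /\ y <> z /\ x <> z)
  (nu : (Mt T -> R) -> R) (Hnu : positive_radon d nu) :
  exists mu : (Mt T -> R) -> R,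
    positive_radon d mu /\ preceq_minimal d mu /\ preceq d mu nu.
Proof.
pose (t0 := exist (fun mu => positive_radon d mu /\ preceq d mu nu) nu
              (conj Hnu (fun g _ => Rle_refl _)) : PP d nu).
destruct (ZL_preorder t0 (R := Rel d nu)) as [t Ht].
- intros a. apply/asboolP. intros g _. apply Rle_refl.
- intros a b c h1 h2. move/asboolP: h1 => h1. move/asboolP: h2 => h2.
  apply/asboolP. exact (preceq_trans h2 h1).
- exact (chain_lb _ _ Hmet Hnu).
- exists (proj1_sig t). split; [exact (proj1 (proj2_sig t))|split; [|exact (proj2 (proj2_sig t))]].
  intros lam Hlam Hle.
  pose (s := exist (fun mu => positive_radon d mu /\ preceq d mu nu) lam
               (conj Hlam (preceq_trans Hle (proj2 (proj2_sig t)))) : PP d nu).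
  have h : Rel d nu t s by apply/asboolP; exact Hle.
  move: (Ht s h) => /asboolP. exact.
Qed.
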